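(* Let $k>1$, $g_c=k/(1+k)^2$ and $X(g)=\frac{1-\sqrt{1-4g}}2$. For $T_0\in\mathcal T_{\rm fin}$ of height $r$ with $K=|D_r(T_0)|$, set $\Lambda(T_0)=K\,k^{r-1}g_c^{|T_0|-K}X(g_c)^{K-1}$. Then for every $r\in\mathbb N$, $$\sum_{T_0\in\mathcal T_{\rm fin}:\,h(T_0)=r}\Lambda(T_0)=1.$$
   Context: Rooted planar trees: $D_r(T)$ is the ordered set of vertices at height $r$, root has exactly one child; $|T|$ = number of edges; $h(T)$ = height; $\mathcal T_{\rm fin}$ = set of finite such trees. *)

(* Defs.v *)
From HB Require Import structures.
From mathcomp Require Import all_boot all_order all_algebra.
From mathcomp Require Import all_classical all_reals all_analysis.
Set Implicit Arguments. Unset Strict Implicit. Unset Printing Implicit Defensive.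
Import Order.TTheory GRing.Theory Num.Theory.

(* Rooted planar (plane) trees: a vertex together with the ordered list of
   the subtrees rooted at its children. *)
Inductive ptree : Type := PNode of seq ptree.

Fixpoint ptree_enc (t : ptree) : GenTree.tree unit :=
  match t with PNode ts => GenTree.Node 0 (map ptree_enc ts) end.
Fixpoint ptree_dec (u : GenTree.tree unit) : ptree :=
  match u with
  | GenTree.Leaf _ => PNode [::]
  | GenTree.Node _ us => PNode (map ptree_dec us)
  end.
Fixpoint ptree_encK (t : ptree) : ptree_dec (ptree_enc t) = t :=
  match t return ptree_dec (ptree_enc t) = t with
  | PNode ts => f_equal PNode
      ((fix aux (ss : seq ptree) : map ptree_dec (map ptree_enc ss) = ss :=
          match ss return map ptree_dec (map ptree_enc ss) = ss with
          | [::] => erefl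
          | s :: ss' => f_equal2 cons (ptree_encK s) (aux ss')
          end) ts)
  end.
HB.instance Definition _ := Equality.copy ptree (can_type ptree_encK).
HB.instance Definition _ := Choice.copy ptree (can_type ptree_encK).
HB.instance Definition _ := Countable.copy ptree (can_type ptree_encK).

(* |T| : number of edges *)
Fixpoint edges (t : ptree) : nat :=
  match t with PNode ts => sumn (map (fun s => (edges s).+1) ts) end.

Fixpoint height (t : ptree) : nat :=
  match t with PNode ts => foldr maxn 0 (map (fun s => (height s).+1) ts) end.

(* |D_d(T)| : number of vertices at height (distance from the root) d *)
Fixpoint level_size (d : nat) (t : ptree) : nat :=
  match d, t with
  | 0, _ => 1
  | d'.+1, PNode ts => sumn (map (level_size d') ts)
  end.

Definition planted (t : ptree) : bool :=
  if t is PNode [:: _] then true else false.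

Local Open Scope ring_scope.

Definition g_c {R : realType} (k : R) : R := k / (1 + k) ^+ 2.
Definition Xfun {R : realType} (g : R) : R := (1 - Num.sqrt (1 - 4 * g)) / 2.

Definition Lambda {R : realType} (k : R) (T0 : ptree) : R :=
  let r := height T0 in
  let K := level_size r T0 in
  K%:R * k ^+ (r - 1) * (g_c k) ^+ (edges T0 - K) * (Xfun (g_c k)) ^+ (K - 1).

(* Main.v *)
Require Import Defs.
From HB Require Import structures.
From mathcomp Require Import all_boot all_order all_algebra.
From mathcomp Require Import all_classical all_reals all_analysis.
From mathcomp Require Import ring lra zify.
Set Implicit Arguments.
Import Order.TTheory GRing.Theory Num.Theory.
Local Open Scope classical_set_scope.
Local Open Scope ring_scope.


Import Order.TTheory GRing.Theory Num.Theory.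
Local Open Scope classical_set_scope.
Local Open Scope ring_scope.
Section Gen.
Variable R : realType.

Lemma esumZl (T : choiceType) (I : set T) (F : T -> \bar R) (c : R) :
  0 <= c -> (forall i, 0 <= F i)%E ->
  (\esum_(i in I) (c%:E * F i) = c%:E * \esum_(i in I) F i)%E.
Proof.
move=> c0 F0; rewrite /esum -ereal_supZl//; last first.
  by apply/set0P; exists 0%E; exists set0; [exact: fsets_set0| rewrite fsbig_set0].
congr ereal_sup; apply/seteqP; split => x /=.
  by move=> [A FA <-]; exists (\sum_(i \in A) F i)%E; [exists A|rewrite ge0_mule_fsumr].
by move=> [_ [A FA <-] <-]; exists A => //; rewrite ge0_mule_fsumr.
Qed.

Lemma esum_prod (T1 T2 : choiceType) (I : set T1) (J : set T2) (a : T1 -> R) (b : T2 -> R) B :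
  (forall i, 0 <= a i) -> (forall j, 0 <= b j) ->
  \esum_(j in J) (b j)%:E = B%:E ->
  \esum_(p in I `*` J) (a p.1 * b p.2)%:E = ((\esum_(i in I) (a i)%:E) * B%:E)%E.
Proof.
move=> a0 b0 hB.
have B0 : 0 <= B by rewrite -lee_fin -hB esum_ge0// => j _; rewrite lee_fin.
transitivity (\esum_(i in I) \esum_(j in J) (a i * b j)%:E)%E.
  rewrite (@esum_esum _ _ _ I (fun=> J) (fun i j => (a i * b j)%:E)) //.
  by move=> i j _ _; rewrite lee_fin mulr_ge0.
transitivity (\esum_(i in I) (B%:E * (a i)%:E))%E.
  apply: eq_esum => i _; under eq_esum do rewrite EFinM.
  by rewrite esumZl; [rewrite hB muleC|exact: a0|move=> j; rewrite lee_fin].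
by rewrite esumZl; [rewrite muleC|exact: B0|move=> i; rewrite lee_fin].
Qed.

End Gen.


Import Order.TTheory GRing.Theory Num.Theory.
Local Open Scope classical_set_scope.
Local Open Scope ring_scope.
Section Seqs.
Variable R : realType.
Variable T : choiceType.

Definition Lm (H : set T) (m : nat) : set (seq T) :=
  [set s | size s = m /\ (forall t, t \in s -> H t)].

Lemma Lm0 H : Lm H 0 = [set [::]].
Proof.
apply/seteqP; split => s /=.
  by case: s => [//|? ?] [].
by move=> ->; split.
Qed.

Lemma LmS H m : Lm H m.+1 = (fun p => p.1 :: p.2) @` (H `*` Lm H m).
Proof.
apply/seteqP; split => s /=.
  case: s => [|t s] [//= [hs] hH].
  exists (t, s) => //; split => /=; first by apply: hH; rewrite mem_head.
  by split => // u us; apply: hH; rewrite in_cons us orbT.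
move=> [[t s'] [/= Ht [hs hH]] <-]; split => /=; first by rewrite hs.
by move=> u; rewrite in_cons => /orP[/eqP ->|/hH].
Qed.

Lemma Lm_inj H m : set_inj (H `*` Lm H m) (fun p => p.1 :: p.2).
Proof. by move=> [? ?] [? ?] _ _ [-> ->]. Qed.

Lemma esum_Lw H (f : T -> R) A : (forall t, 0 <= f t) ->
  \esum_(t in H) (f t)%:E = A%:E ->
  forall m, \esum_(s in Lm H m) (\prod_(t <- s) f t)%:E = (A ^+ m)%:E.
Proof.
move=> f0 hA; elim=> [|m IH].
  by rewrite Lm0 esum_set1 ?big_nil ?expr0 // lee_fin.
rewrite LmS esum_image; last exact: Lm_inj.
under eq_esum do rewrite /= big_cons.
rewrite (@esum_prod R _ _ H (Lm H m) f (fun s => \prod_(t <- s) f t) (A ^+ m)) //.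
  by rewrite hA -EFinM exprS.
by move=> s; rewrite prodr_ge0.
Qed.

Lemma esum_Lkw H (f : T -> R) (c : T -> nat) A B : (forall t, 0 <= f t) ->
  \esum_(t in H) (f t)%:E = A%:E ->
  \esum_(t in H) ((c t)%:R * f t)%:E = B%:E ->
  forall m, \esum_(s in Lm H m) ((\sum_(t <- s) c t)%:R * \prod_(t <- s) f t)%:E
    = (m%:R * A ^+ m.-1 * B)%:E.
Proof.
move=> f0 hA hB; elim=> [|m IH].
  by rewrite Lm0 esum_set1 ?big_nil ?mul0r // lee_fin mul0r.
rewrite LmS esum_image; last exact: Lm_inj.
have pf s : 0 <= \prod_(t <- s) f t by rewrite prodr_ge0.
transitivity (\esum_(p in H `*` Lm H m)
   (((c p.1)%:R * f p.1) * \prod_(t <- p.2) f t)%:E +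
   \esum_(p in H `*` Lm H m) (f p.1 * ((\sum_(t <- p.2) c t)%:R * \prod_(t <- p.2) f t))%:E)%E.
  rewrite -esumD; last 2 first.
  - by move=> p _; rewrite lee_fin !mulr_ge0.
  - by move=> p _; rewrite lee_fin !mulr_ge0.
  apply: eq_esum => p _ /=; rewrite !big_cons -EFinD; congr EFin.
  by rewrite natrD; ring.
rewrite (@esum_prod R _ _ H (Lm H m) (fun t => (c t)%:R * f t) (fun s => \prod_(t <- s) f t) (A ^+ m)) //; last first.
- exact: esum_Lw.
- by move=> t; rewrite mulr_ge0.
rewrite (@esum_prod R _ _ H (Lm H m) f (fun s => (\sum_(t <- s) c t)%:R * \prod_(t <- s) f t) (m%:R * A ^+ m.-1 * B)) //; last first.
- by move=> s; rewrite mulr_ge0.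
rewrite hA hB -!EFinM -EFinD; congr EFin.
case: m {IH} => [|m] /=; first by rewrite !mul0r mulr0 addr0 expr0 !mul1r mulr1.
rewrite exprS -[m.+2]addn1 -[m.+1]addn1 !natrD; ring.
Qed.

Definition Sq (H : set T) : set (seq T) := [set s : seq T | forall t : T, t \in s -> H t].

Lemma Sq_bigcup H : Sq H = \bigcup_(m in [set: nat]) Lm H m.
Proof.
apply/seteqP; split => s /=.
  by move=> hs; exists (size s) => //.
by move=> [m _ [_ hs]].
Qed.

Lemma Lm_triv H : trivIset [set: nat] (Lm H).
Proof. by move=> i j _ _ [s [[<- _] [<- _]]]. Qed.

End Seqs.

Arguments Sq {T}. Arguments Lm {T}.


Import Order.TTheory GRing.Theory Num.Theory.
Local Open Scope classical_set_scope.
Local Open Scope ring_scope.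
Section Ser.
Variable R : realType.

Lemma geo_bound (x : R) n : 0 <= x < 1 ->
  \sum_(0 <= i < n) x ^+ i <= (1 - x)^-1.
Proof.
move=> /andP[x0 x1].
have p : 0 < 1 - x by rewrite subr_gt0.
rewrite -(ler_pM2r p) mulVf ?gt_eqF //.
have -> : (\sum_(0 <= i < n) x ^+ i) * (1 - x) = 1 - x ^+ n.
  elim: n => [|n IH]; first by rewrite big_geq // mul0r expr0 subrr.
  by rewrite big_nat_recr //= mulrDl IH exprS; ring.
by rewrite lerBlDr lerDl exprn_ge0.
Qed.

Lemma G1e (x : R) : 0 <= x < 1 -> (\esum_(m in [set: nat]) (x ^+ m)%:E = ((1 - x)^-1)%:E)%E.
Proof.
move=> hx; have /andP[x0 x1] := hx.
set T := (\esum_(m in _) _)%E.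
have T0 : (0 <= T)%E by apply: esum_ge0 => m _; rewrite lee_fin exprn_ge0.
have Tle : (T <= ((1 - x)^-1)%:E)%E.
  rewrite /T -nneseries_esumT; last by move=> m; rewrite lee_fin exprn_ge0.
  apply: lime_le; first by apply: is_cvg_nneseries => m _ _; rewrite lee_fin exprn_ge0.
  by apply: nearW => n; rewrite sumEFin lee_fin geo_bound.
have Tf : T \is a fin_num by rewrite ge0_fin_numE // (le_lt_trans Tle) // ltry.
have eqT : T = (1%:E + x%:E * T)%E.
  have E1 : [set: nat] `&` [set 0%N] = [set 0%N].
    by apply/seteqP; split => [m [] //|m -> //].
  have E2 : [set: nat] `&` ~` [set 0%N] = succn @` [set: nat].
    apply/seteqP; split => m /=; last by move=> [n _ <-].
    by case: m => [[_ /(_ erefl)]//|m _]; exists m.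
  rewrite {1}/T (esumID [set 0%N]); last by move=> m _; rewrite lee_fin exprn_ge0.
  rewrite E1 E2 esum_set1 ?lee_fin ?expr0 //.
  rewrite esum_image //; last by move=> ? ? _ _ [].
  rewrite -esumZl //; last by move=> m; rewrite lee_fin exprn_ge0.
  by congr (_ + _)%E; apply: eq_esum => m _; rewrite -EFinM exprS.
rewrite -(fineK Tf) in eqT *; congr EFin.
move: eqT; rewrite -EFinM -EFinD => -[] h.
have q : 1 - x != 0 by rewrite subr_eq0 eq_sym lt_eqF.
apply: (mulIf q); rewrite mulVf // mulrBr mulr1 {1}h; ring.
Qed.

Definition vv (x : R) (m : nat) : R := m%:R * x ^+ m.-1.

Lemma vv_ge0 x m : 0 <= x -> 0 <= vv x m.
Proof. by move=> x0; rewrite /vv mulr_ge0 ?exprn_ge0. Qed.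

Lemma vv_closed (x : R) n :
  (\sum_(0 <= i < n.+1) vv x i) * (1 - x) ^+ 2 = 1 - n.+1%:R * x ^+ n + n%:R * x ^+ n.+1.
Proof.
elim: n => [|n IH].
  by rewrite big_nat1 /vv mul0r mul0r expr0 mulr1 mul0r addr0 subrr.
rewrite big_nat_recr //= mulrDl IH /vv /=.
rewrite -!natr1 !exprS; ring.
Qed.

Lemma vv_bound (x : R) n : 0 <= x < 1 ->
  \sum_(0 <= i < n) vv x i <= ((1 - x) ^+ 2)^-1.
Proof.
move=> /andP[x0 x1].
have p : 0 < (1 - x) ^+ 2 by rewrite exprn_gt0 // subr_gt0.
case: n => [|n]; first by rewrite big_geq // invr_ge0 ltW.
rewrite -(ler_pM2r p) mulVf ?gt_eqF // vv_closed.
have hle : n%:R * x ^+ n.+1 <= n.+1%:R * x ^+ n.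
  apply: ler_pM; rewrite ?ler_nat ?exprn_ge0 //.
  by rewrite exprS ler_piMl ?exprn_ge0 // ltW.
lra.
Qed.

Lemma G2e (x : R) : 0 <= x < 1 ->
  (\esum_(m in [set: nat]) (vv x m)%:E = (((1 - x) ^+ 2)^-1)%:E)%E.
Proof.
move=> hx; have /andP[x0 x1] := hx.
set T := (\esum_(m in _) _)%E.
have T0 : (0 <= T)%E by apply: esum_ge0 => m _; rewrite lee_fin vv_ge0.
have Tle : (T <= (((1 - x) ^+ 2)^-1)%:E)%E.
  rewrite /T -nneseries_esumT; last by move=> m; rewrite lee_fin vv_ge0.
  apply: lime_le; first by apply: is_cvg_nneseries => m _ _; rewrite lee_fin vv_ge0.
  by apply: nearW => n; rewrite sumEFin lee_fin vv_bound.
have Tf : T \is a fin_num by rewrite ge0_fin_numE // (le_lt_trans Tle) // ltry.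
have eqT : T = (x%:E * T + ((1 - x)^-1)%:E)%E.
  have E1 : [set: nat] `&` [set 0%N] = [set 0%N].
    by apply/seteqP; split => [m [] //|m -> //].
  have E2 : [set: nat] `&` ~` [set 0%N] = succn @` [set: nat].
    apply/seteqP; split => m /=; last by move=> [n _ <-].
    by case: m => [[_ /(_ erefl)]//|m _]; exists m.
  rewrite {1}/T (esumID [set 0%N]); last by move=> m _; rewrite lee_fin vv_ge0.
  rewrite E1 E2 esum_set1 ?lee_fin ?vv_ge0 // {1}/vv mul0r add0e.
  rewrite esum_image //; last by move=> ? ? _ _ [].
  rewrite -esumZl //; last by move=> m; rewrite lee_fin vv_ge0.
  rewrite -G1e // -esumD; last 2 first.
  - by move=> m _; rewrite -EFinM lee_fin mulr_ge0 // vv_ge0.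
  - by move=> m _; rewrite lee_fin exprn_ge0.
  apply: eq_esum => m _; rewrite -EFinM -EFinD /vv /=; congr EFin.
  case: m => [|m] /=; first by rewrite mul0r mulr0 add0r expr0 mulr1.
  rewrite -!natr1 exprS; ring.
rewrite -(fineK Tf) in eqT *; congr EFin.
move: eqT; rewrite -EFinM -EFinD => -[] h.
have q : 1 - x != 0 by rewrite subr_eq0 eq_sym lt_eqF.
apply: (mulIf (expf_neq0 2 q)); rewrite mulVf ?expf_neq0 //.
have h2 : fine T * (1 - x) = (1 - x)^-1 by rewrite mulrBr mulr1 {1}h; ring.
by rewrite expr2 mulrA h2 mulVf.
Qed.

End Ser.


Import Order.TTheory GRing.Theory Num.Theory.
Local Open Scope classical_set_scope.
Local Open Scope ring_scope.

Section SeqTot.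
Variable R : realType.
Variable T : choiceType.

Lemma esum_Sw (H : set T) (f : T -> R) A : (forall t, 0 <= f t) ->
  \esum_(t in H) (f t)%:E = A%:E -> 0 <= A < 1 ->
  \esum_(s in Sq H) (\prod_(t <- s) f t)%:E = ((1 - A)^-1)%:E.
Proof.
move=> f0 hA hA1; rewrite Sq_bigcup esum_bigcupT; last 2 first.
- exact: Lm_triv.
- by move=> s; rewrite lee_fin prodr_ge0.
under eq_esum do rewrite (esum_Lw _ _ _ f0 hA).
exact: G1e.
Qed.

Lemma esum_Skw (H : set T) (f : T -> R) (c : T -> nat) A B : (forall t, 0 <= f t) ->
  \esum_(t in H) (f t)%:E = A%:E ->
  \esum_(t in H) ((c t)%:R * f t)%:E = B%:E -> 0 <= A < 1 ->
  \esum_(s in Sq H) ((\sum_(t <- s) c t)%:R * \prod_(t <- s) f t)%:E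
    = (B * ((1 - A) ^+ 2)^-1)%:E.
Proof.
move=> f0 hA hB hA1; rewrite Sq_bigcup esum_bigcupT; last 2 first.
- exact: Lm_triv.
- by move=> s; rewrite lee_fin mulr_ge0 ?prodr_ge0.
have B0 : 0 <= B.
  by rewrite -lee_fin -hB esum_ge0// => t _; rewrite lee_fin mulr_ge0.
have /andP[A0 _] := hA1.
under eq_esum do rewrite (esum_Lkw _ _ _ _ f0 hA hB) -/(@vv R A _) EFinM muleC.
by rewrite esumZl ?G2e ?EFinM // => m; rewrite lee_fin vv_ge0.
Qed.

End SeqTot.

Lemma ptree_ind2 (P : ptree -> Prop) :
  (forall ts, (forall t, t \in ts -> P t) -> P (PNode ts)) -> forall t, P t.
Proof.
move=> IH; fix F 1 => -[ts]; apply: IH.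
elim: ts => [u|s ss IHs u]; first by clear F; rewrite in_nil.
rewrite in_cons => /orP[/eqP -> | /IHs //]; exact: F.
Qed.

Lemma foldr_max_le (s : seq nat) n : (foldr maxn 0 s <= n)%N = all (fun a => a <= n)%N s.
Proof. by elim: s => //= a s IH; rewrite geq_max IH. Qed.

Lemma height_PNode_le ts d :
  (height (PNode ts) <= d.+1)%N = all (fun t => height t <= d)%N ts.
Proof. by rewrite /= foldr_max_le all_map. Qed.

Lemma sumn_map0 (ts : seq ptree) (f : ptree -> nat) :
  (forall t, t \in ts -> f t = 0%N) -> sumn (map f ts) = 0%N.
Proof.
elim: ts => //= t ts IH h; rewrite h ?mem_head // IH // => u u_in.
by apply: h; rewrite in_cons u_in orbT.
Qed.

Lemma level0 d t : (height t < d)%N -> level_size d t = 0%N.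
Proof.
elim/ptree_ind2: t d => ts IH [|d] //= h.
apply: sumn_map0 => t t_in; apply: IH => //.
move: h; rewrite ltnS foldr_max_le all_map => /allP/(_ t t_in).
by [].
Qed.

Lemma level_le d t : (level_size d t <= edges t + 1)%N.
Proof.
elim/ptree_ind2: t d => ts IH [|d] /=; first by rewrite addn1.
apply: leq_trans (leq_addr 1 _).
elim: ts IH => //= t ts IHts IH; rewrite leq_add //.
  by rewrite -addn1; apply: IH; rewrite mem_head.
by apply: IHts => u u_in; apply: IH; rewrite in_cons u_in orbT.
Qed.

Definition Hd (d : nat) : set ptree := [set T | (height T <= d)%N].

Lemma Hd0 : Hd 0 = [set PNode [::]].
Proof.
apply/seteqP; split => [[[|t ts]]|T ->] //=.
by rewrite /Hd /= geq_max ltn0.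
Qed.

Lemma HdS d : Hd d.+1 = PNode @` Sq (Hd d).
Proof.
apply/seteqP; split => [[ts]|T [ts hts <-]] /=.
  rewrite /Hd /= -/(height (PNode ts)) height_PNode_le => /allP h.
  by exists ts => // t /h.
by rewrite /Hd /= -/(height (PNode ts)) height_PNode_le; apply/allP => t /hts.
Qed.

Lemma level_PNode d ts : level_size d.+1 (PNode ts) = (\sum_(t <- ts) level_size d t)%N.
Proof. by elim: ts => [|t ts IH]; rewrite ?big_nil ?big_cons //= -IH. Qed.

Section Trees.
Variable R : realType.

Definition wt (g y : R) d T := g ^+ edges T * y ^+ level_size d T.

Lemma wt_PNode g y d ts : wt g y d.+1 (PNode ts) = \prod_(t <- ts) (g * wt g y d t).
Proof.
elim: ts => [|t ts IH]; first by rewrite /wt /= big_nil !expr0 mulr1.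
rewrite big_cons -IH /wt /= !exprD exprS; ring.
Qed.

End Trees.

Arguments wt {R}.


Import Order.TTheory GRing.Theory Num.Theory.
Local Open Scope classical_set_scope.
Local Open Scope ring_scope.

Section Main.
Variable R : realType.

Lemma Xval (k : R) : 1 < k -> Xfun (g_c k) = (1 + k)^-1.
Proof.
move=> hk; have k0 : 0 < k by apply: lt_trans hk.
have k1 : 1 + k != 0 by rewrite gt_eqF // addr_gt0.
rewrite /Xfun /g_c.
have -> : 1 - 4 * (k / (1 + k) ^+ 2) = ((k - 1) / (1 + k)) ^+ 2 by field.
rewrite sqrtr_sqr ger0_norm; last by rewrite divr_ge0 ?subr_ge0 ?ltW // addr_gt0.
by field.
Qed.

Lemma tree_sums (k : R) : 1 < k -> forall d,
  \esum_(T in Hd d) (wt (g_c k) ((1 + k) / k) d T)%:E = ((1 + k) / k)%:E /\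
  \esum_(T in Hd d) ((level_size d T)%:R * wt (g_c k) ((1 + k) / k) d T)%:E
    = ((1 + k) / k / k ^+ d)%:E.
Proof.
move=> hk; have k0 : 0 < k by apply: lt_trans hk.
have k1p : 0 < 1 + k by rewrite addr_gt0.
have k1 : 1 + k != 0 by rewrite gt_eqF.
have kn0 : k != 0 by rewrite gt_eqF.
set g := g_c k; set y := (1 + k) / k.
have gpos : 0 < g by rewrite /g /g_c divr_gt0 // exprn_gt0.
have ypos : 0 < y by rewrite /y divr_gt0.
have gy : g * y = (1 + k)^-1 by rewrite /g /y /g_c; field; rewrite ?k1 ?kn0.
have hA : 0 <= g * y < 1.
  rewrite gy invr_ge0 ltW //= invf_lt1 //; lra.
have wt0 d T : 0 <= wt g y d T by rewrite /wt mulr_ge0 ?exprn_ge0 ?ltW.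
elim=> [|d [IH1 IH2]].
  rewrite Hd0 !esum_set1 ?lee_fin ?wt0 ?mulr_ge0 ?ler0n ?wt0 //; last 2 first.
  - by rewrite ltW.
  - by rewrite invr_ge0 ltW.
  by split; rewrite /wt /= expr0 mul1r expr1 ?expr0 ?divr1 ?mul1r.
have hF : \esum_(t in Hd d) (g * wt g y d t)%:E = (g * y)%:E.
  under eq_esum do rewrite EFinM.
  by rewrite esumZl ?IH1 ?EFinM // ?ltW // => t; rewrite lee_fin.
have hC : \esum_(t in Hd d) ((level_size d t)%:R * (g * wt g y d t))%:E
    = (g * (y / k ^+ d))%:E.
  under eq_esum do rewrite mulrCA EFinM.
  by rewrite esumZl ?IH2 ?EFinM // ?ltW // => t; rewrite lee_fin mulr_ge0.
have fge0 t : 0 <= g * wt g y d t by rewrite mulr_ge0 // ltW.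
split.
  rewrite HdS esum_image; last by move=> ? ? _ _ [].
  under eq_esum do rewrite wt_PNode.
  rewrite (esum_Sw _ _ _ fge0 hF hA) gy; congr EFin.
  by rewrite /y; field; rewrite ?k1 ?kn0.
rewrite HdS esum_image; last by move=> ? ? _ _ [].
under eq_esum do rewrite wt_PNode level_PNode.
rewrite (esum_Skw _ _ _ _ fge0 hF hC hA) gy; congr EFin.
have kd : k ^+ d != 0 by rewrite expf_neq0.
rewrite /y /g /g_c (exprS k d); move: kd; generalize (k ^+ d) => K KD.
by field; rewrite ?k1 ?kn0 ?KD.
Qed.

End Main.


Import Order.TTheory GRing.Theory Num.Theory.
Local Open Scope classical_set_scope.
Local Open Scope ring_scope.

Lemma Lr_id (R : realType) (k : R) (hk : 1 < k) d S :
  let K := level_size d S in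
  K%:R * k ^+ d * g_c k ^+ ((edges S).+1 - K) * ((1 + k)^-1) ^+ (K - 1) =
  k ^+ d * g_c k / (1 + k)^-1 * (K%:R * wt (g_c k) ((1 + k) / k) d S).
Proof.
move=> K; have k0 : 0 < k by apply: lt_trans hk.
have k1 : 1 + k != 0 by rewrite gt_eqF // addr_gt0.
have kn0 : k != 0 by rewrite gt_eqF.
have hK := level_le d S.
rewrite /wt -/K; move: hK; rewrite -/K.
case: K => [|K'] hK; first by rewrite !mul0r mulr0.
have he : edges S = ((edges S - K') + K')%N by lia.
rewrite subSS subn1 /= {2}he exprD exprS.
have hPQ : g_c k ^+ K' * ((1 + k) / k) ^+ K' = ((1 + k)^-1) ^+ K'.
  by rewrite -exprMn /g_c; congr (_ ^+ _); field; rewrite ?k1 ?kn0.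
rewrite -hPQ; move: (g_c k ^+ (edges S - K')) (g_c k ^+ K') (((1 + k) / k) ^+ K') (k ^+ d) => A P Q D.
by rewrite /g_c; field; rewrite ?k1 ?kn0.
Qed.

Unset Implicit Arguments.
Theorem mainTheorem6 (R : realType) (k : R) (hk : 1 < k) (r : nat) (hr : (0 < r)%N) :
  (\esum_(T in [set T : ptree | planted T /\ height T = r]) (Lambda k T)%:E = 1)%E.
Proof.
case: r hr => [//|d] _.
have k0 : 0 < k by apply: lt_trans hk.
have k1 : 1 + k != 0 by rewrite gt_eqF // addr_gt0.
have kn0 : k != 0 by rewrite gt_eqF.
pose Lr (T : ptree) : R := let K := level_size d.+1 T in
  K%:R * k ^+ d * g_c k ^+ (edges T - K) * ((1 + k)^-1) ^+ (K - 1).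
transitivity (\esum_(T in (fun S => PNode [:: S]) @` Hd d) (Lr T)%:E).
  rewrite esum_mkcond [RHS]esum_mkcond; apply: eq_esum => T _.
  case: (pselect (planted T /\ height T = d.+1)) => [[hp hh]|hn].
    case: T hp hh => -[|S [|? ?]] // _ hh.
    rewrite mem_set //; rewrite mem_set; last first.
      exists S => //; rewrite /Hd /=; move: hh => /= ; rewrite maxn0 => -[->].
      by [].
    by rewrite /Lambda hh (@Xval R k hk) subn1.
  rewrite memNset; last exact: hn.
  case: (pselect (((fun S => PNode [:: S]) @` Hd d) T)) => [[S hS eq]|hni]; last first.
    by rewrite memNset; last exact: hni.
  rewrite mem_set; last by exists S.
  have hlt : (height S < d)%N.
    rewrite ltn_neqAle hS andbT; apply/eqP => hSd; apply: hn; rewrite -eq.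
    by split => //=; rewrite hSd maxn0.
  by rewrite -eq /Lr /= level0 // !mul0r.
rewrite esum_image; last by move=> ? ? _ _ [].
transitivity (\esum_(S in Hd d) ((k ^+ d * g_c k / (1 + k)^-1)%:E *
    ((level_size d S)%:R * wt (g_c k) ((1 + k) / k) d S)%:E))%E.
  apply: eq_esum => S _; rewrite -EFinM; congr EFin.
  by rewrite /Lr /= !addn0 Lr_id.
rewrite esumZl; first last.
- move=> S; rewrite lee_fin mulr_ge0 // /wt mulr_ge0 // exprn_ge0 //.
    by rewrite /g_c divr_ge0 ?exprn_ge0 ?ltW // addr_gt0.
  by rewrite divr_ge0 ?ltW // addr_gt0.
- rewrite divr_ge0 ?invr_ge0 ?mulr_ge0 ?exprn_ge0 ?ltW // ?addr_gt0 //.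
  by rewrite invr_gt0 exprn_gt0 // addr_gt0.
rewrite (@tree_sums R k hk d).2 -EFinM; congr EFin.
have kd : k ^+ d != 0 by rewrite expf_neq0.
move: kd; generalize (k ^+ d) => D KD.
by rewrite /g_c; field; rewrite ?k1 ?kn0 ?KD.
Qed.
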